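(* Let $X$ be a set of variables, $\mathbb{K}$ a field, $<$ an admissible (monomial) order on the set $[X]$ of monomials, and $I$ an ideal of $\mathbb{K}[X]$. Let $R=\{f_1,\dots,f_n\}$ be a finite set of nonzero polynomials generating $I$. Then $R$ is a Gröbner basis of $I$ (with respect to $<$) if and only if the set $F_R=\{T_1,\dots,T_n\}$ of reduction operators associated to $R$ is confluent.
   Context: A reduction operator relative to $([X],<)$ is an idempotent linear endomorphism $T$ of $\mathbb{K}[X]$ such that for every monomial $m$, either $T(m)=m$ or $T(m)$ is a linear combination of monomials strictly smaller than $m$. For every subspace $V$ of $\mathbb{K}[X]$ there is a unique reduction operator with kernel $V$. $F_R=\{T_1,\dots,T_n\}$ where $T_i$ is the reduction operator whose kernel is the ideal of $\mathbb{K}[X]$ generated by $f_i$. For a reduction operator $T$, $\mathrm{nf}(T)=\{m\in[X]\mid T(m)=m\}$. For a set $F$ of reduction operators, $\wedge F$ is the reduction operator whose kernel is $\sum_{T\in F}\ker T$, and $F$ is confluent if $\bigcap_{T\in F}\mathrm{nf}(T)=\mathrm{nf}(\wedge F)$. *)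

(* Defs.v *)
From mathcomp Require Import all_boot all_algebra.
From mathcomp Require Import mpoly.
Set Implicit Arguments. Unset Strict Implicit. Unset Printing Implicit Defensive.
Import GRing.Theory.
Local Open Scope ring_scope.

Section Defs.
Variables (K : fieldType) (nv : nat).
Local Notation poly := {mpoly K[nv]}.
Local Notation mon := 'X_{1..nv}.

Definition admissible (lt : mon -> mon -> Prop) : Prop :=
  [/\ (forall m, ~ lt m m),
      (forall m1 m2 m3, lt m1 m2 -> lt m2 m3 -> lt m1 m3),
      (forall m1 m2, m1 <> m2 -> lt m1 m2 \/ lt m2 m1),
      (forall m1 m2 m, lt m1 m2 -> lt (m1 + m)%MM (m2 + m)%MM) &
      (forall m, m <> 0%MM -> lt 0%MM m)].

Definition is_lm (lt : mon -> mon -> Prop) (p : poly) (m : mon) : Prop :=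
  m \in msupp p /\ forall m', m' \in msupp p -> m' <> m -> lt m' m.

Definition reduction_operator (lt : mon -> mon -> Prop) (T : poly -> poly) : Prop :=
  [/\ (forall (a : K) (p q : poly), T (a *: p + q) = a *: T p + T q),
      (forall p, T (T p) = T p) &
      (forall m : mon, T 'X_[m] = 'X_[m] \/
                       (forall m', m' \in msupp (T 'X_[m]) -> lt m' m))].

Definition has_kernel (T : poly -> poly) (V : poly -> Prop) : Prop :=
  forall p, T p = 0 <-> V p.

Definition gen_ideal (k : nat) (f : 'I_k -> poly) (p : poly) : Prop :=
  exists q : 'I_k -> poly, p = \sum_(i < k) q i * f i.

Definition sum_kernels (k : nat) (T : 'I_k -> poly -> poly) (p : poly) : Prop :=
  exists ps : 'I_k -> poly, (forall i, T i (ps i) = 0) /\ p = \sum_(i < k) ps i.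

Definition nf (T : poly -> poly) (m : mon) : Prop := T 'X_[m] = 'X_[m].

(* F (indexed by 'I_k) is confluent, W being the reduction operator /\F *)
Definition confluent (k : nat) (T : 'I_k -> poly -> poly) (W : poly -> poly) : Prop :=
  forall m : mon, (forall i, nf (T i) m) <-> nf W m.

Definition groebner_basis (lt : mon -> mon -> Prop) (k : nat) (f : 'I_k -> poly)
  (I : poly -> Prop) : Prop :=
  (forall i, I (f i)) /\
  forall p, I p -> p != 0 ->
    exists i m mi, [/\ is_lm lt p m, is_lm lt (f i) mi & (mi <= m)%MM].

End Defs.

(* Main.v *)
Require Import Defs.
From mathcomp Require Import all_boot all_algebra.
From mathcomp Require Import mpoly.
From Stdlib Require Import Classical.
Set Implicit Arguments. Unset Strict Implicit. Unset Printing Implicit Defensive.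
Import GRing.Theory.
Local Open Scope ring_scope.

Section Aux.
Variables (K : fieldType) (nv : nat).
Local Notation poly := {mpoly K[nv]}.
Local Notation mon := 'X_{1..nv}.
Variable lt : mon -> mon -> Prop.
Hypothesis Hlt : admissible lt.

Lemma lt_irr m : ~ lt m m. Proof. by case: Hlt. Qed.
Lemma lt_trans m1 m2 m3 : lt m1 m2 -> lt m2 m3 -> lt m1 m3.
Proof. by case: Hlt => _ h _ _ _; apply: h. Qed.
Lemma lt_tot m1 m2 : m1 <> m2 -> lt m1 m2 \/ lt m2 m1.
Proof. by case: Hlt => _ _ h _ _; apply: h. Qed.
Lemma lt_addr m1 m2 m : lt m1 m2 -> lt (m1 + m)%MM (m2 + m)%MM.
Proof. by case: Hlt => _ _ _ h _; apply: h. Qed.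
Lemma lt_addl m1 m2 m : lt m1 m2 -> lt (m + m1)%MM (m + m2)%MM.
Proof. by rewrite ![(m + _)%MM]addmC; apply: lt_addr. Qed.

Lemma lt_neq m1 m2 : lt m1 m2 -> m1 <> m2.
Proof. by move=> h e; subst; apply: (lt_irr h). Qed.

Lemma seq_max (s : seq mon) : s != [::] ->
  exists m, m \in s /\ forall m', m' \in s -> m' <> m -> lt m' m.
Proof.
elim: s => // a s IH _.
have [->|ne] := eqVneq s [::].
  exists a; split; first by rewrite mem_seq1.
  by move=> m'; rewrite mem_seq1 => /eqP.
have [m [ms Hm]] := IH ne.
have [->|nam] := eqVneq a m.
  exists m; split; first by rewrite inE eqxx.
  by move=> m'; rewrite inE => /orP [/eqP|] //; apply: Hm.
have nam' : a <> m by apply/eqP.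
case: (lt_tot nam') => h.
  exists m; split; first by rewrite inE ms orbT.
  move=> m'; rewrite inE => /orP [/eqP -> _ //|]; apply: Hm.
exists a; split; first by rewrite inE eqxx.
move=> m'; rewrite inE => /orP [/eqP //|m's na].
have [->//|nm] := eqVneq m' m.
have nm' : m' <> m by apply/eqP.
exact: lt_trans (Hm _ m's nm') h.
Qed.

Lemma neqE (T : eqType) (x y : T) : x != y -> x <> y.
Proof. by move/eqP. Qed.

Lemma lm_exists (p : poly) : p != 0 -> exists m, is_lm lt p m.
Proof.
move=> nz; have : msupp p != [::] by rewrite msupp_eq0.
by case/seq_max => m [h1 h2]; exists m.
Qed.

Lemma lm_unique (p : poly) m1 m2 : is_lm lt p m1 -> is_lm lt p m2 -> m1 = m2.
Proof.
move=> [h1 H1] [h2 H2]; apply: NNPP => ne.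
have := lt_trans (H2 _ h1 ne) (H1 _ h2 (fun e => ne (esym e))).
exact: lt_irr.
Qed.

Lemma lm_mul (q g : poly) a b : is_lm lt q a -> is_lm lt g b ->
  is_lm lt (q * g) (a + b)%MM.
Proof.
move=> [qa Ha] [gb Hb]; split.
  rewrite mcoeff_msupp mpolyME raddf_sum /= big_allpairs.
  rewrite (bigD1_seq a) ?msupp_uniq //= (bigD1_seq b) ?msupp_uniq //=.
  rewrite mcoeffZ mcoeffX eqxx mulr1.
  rewrite big1 ?addr0; last first.
    move=> y nyb; rewrite mcoeffZ mcoeffX.
    have [e|_] := eqVneq (a + y)%MM (a + b)%MM; last by rewrite mulr0.
    by rewrite (addmI e) eqxx in nyb.
  rewrite big_seq_cond big1 ?addr0; first by rewrite mulf_neq0 // -mcoeff_msupp.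
  move=> x /andP [xq nxa]; rewrite big_seq big1 // => y yg.
  rewrite mcoeffZ mcoeffX.
  have [e|_] := eqVneq (x + y)%MM (a + b)%MM; last by rewrite mulr0.
  exfalso.
  have ltxa : lt x a by apply: Ha => //; apply/eqP.
  have : lt (x + y)%MM (a + b)%MM.
    have [->|nyb] := eqVneq y b; first exact: lt_addr.
    exact: lt_trans (lt_addr y ltxa) (lt_addl a (Hb _ yg (neqE nyb))).
  by rewrite e; apply: lt_irr.
move=> m' /msuppM_le /allpairsP [[x y] /= [xq yg ->]] ne.
have [ex|nxa] := eqVneq x a.
  subst x; have [ey|nyb] := eqVneq y b; first by subst.
  exact: lt_addl (Hb _ yg (neqE nyb)).
have ltxa : lt x a by apply: Ha => //; apply/eqP.
have [->|nyb] := eqVneq y b; first exact: lt_addr.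
exact: lt_trans (lt_addr y ltxa) (lt_addl a (Hb _ yg (neqE nyb))).
Qed.

Section Red.
Variable T : poly -> poly.
Hypothesis HT : reduction_operator lt T.

Lemma redD p q : T (p + q) = T p + T q.
Proof. case: HT => h _ _. have := h 1 p q. rewrite !scale1r. done. Qed.
Lemma red0 : T 0 = 0.
Proof. by move: (redD 0 0); rewrite addr0 => /esym/eqP; rewrite -subr_eq0 addrK => /eqP. Qed.
Lemma redZ c p : T (c *: p) = c *: T p.
Proof. by case: HT => h _ _; rewrite -[c *: p]addr0 h red0 addr0. Qed.
Lemma redN p : T (- p) = - T p.
Proof. by rewrite -scaleN1r redZ scaleN1r. Qed.
Lemma red_sum (r : seq mon) (F : mon -> poly) :
  T (\sum_(i <- r) F i) = \sum_(i <- r) T (F i).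
Proof.
elim: r => [|a r IH]; first by rewrite !big_nil red0.
by rewrite !big_cons redD IH.
Qed.

Lemma lm_ne0 (p : poly) m : is_lm lt p m -> p != 0.
Proof. by case=> h _; apply/eqP => e; rewrite e msupp0 in h. Qed.

Lemma red_nf_ker m : ~ nf T m -> exists v, T v = 0 /\ is_lm lt v m.
Proof.
move=> nnf; exists ('X_[m] - T 'X_[m]); split.
  by case: HT => _ hi _; rewrite redD redN hi subrr.
have Hs : forall m', m' \in msupp (T 'X_[m]) -> lt m' m.
  by case: HT => _ _ /(_ m) [].
have mT : m \notin msupp (T 'X_[m]).
  by apply/negP => /Hs; apply: lt_irr.
split.
  by rewrite mcoeff_msupp mcoeffB mcoeffX eqxx (memN_msupp_eq0 mT) subr0 oner_eq0.
move=> m' /msuppB_le; rewrite mem_cat msuppX mem_seq1 => /orP [/eqP //|/Hs //].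
Qed.

Lemma red_ker_nf v m : T v = 0 -> is_lm lt v m -> ~ nf T m.
Proof.
move=> Tv [vm Hv] nfm.
have : (T v)@_m != 0; last by rewrite Tv mcoeff0 eqxx.
rewrite {1}(mpolyE v) red_sum raddf_sum /=.
rewrite (bigD1_seq m) ?msupp_uniq //= redZ mcoeffZ nfm mcoeffX eqxx mulr1.
rewrite big_seq_cond big1 ?addr0; first by rewrite -mcoeff_msupp.
move=> m' /andP [m'v nm']; rewrite redZ mcoeffZ.
have ltm : lt m' m by apply: Hv => //; apply: neqE.
case: HT => _ _ /(_ m') [->|H].
  by rewrite mcoeffX; case: eqP => [e|_]; [by move: ltm; rewrite e => /lt_irr | rewrite mulr0].
rewrite (@memN_msupp_eq0 _ _ (T 'X_[m']) m) ?mulr0 //; apply/negP => /H h.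
by apply: (lt_irr (lt_trans h ltm)).
Qed.
End Red.
End Aux.
Unset Implicit Arguments.

Theorem mainTheorem9 (K : fieldType) (nv : nat)
  (lt : 'X_{1..nv} -> 'X_{1..nv} -> Prop) (Hlt : admissible lt)
  (I : {mpoly K[nv]} -> Prop)
  (k : nat) (f : 'I_k -> {mpoly K[nv]}) (Hnz : forall i, f i != 0)
  (HI : forall p, I p <-> gen_ideal f p)
  (T : 'I_k -> {mpoly K[nv]} -> {mpoly K[nv]})
  (HT : forall i, reduction_operator lt (T i) /\
                  has_kernel (T i) (gen_ideal (fun _ : 'I_1 => f i)))
  (W : {mpoly K[nv]} -> {mpoly K[nv]})
  (HW : reduction_operator lt W /\ has_kernel W (sum_kernels T)) :
  groebner_basis lt f I <-> confluent T W.
Proof.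
have Hred := fun i => (HT i).1.
have Hker := fun i => (HT i).2.
case: HW => HWr HWk.
have I0 : I 0.
  by apply/HI; exists (fun _ => 0); rewrite big1 // => j _; rewrite mul0r.
have ID : forall p q, I p -> I q -> I (p + q).
  move=> p q /HI [a ->] /HI [b ->]; apply/HI; exists (fun j => a j + b j).
  by rewrite -big_split /=; apply: eq_bigr => j _; rewrite mulrDl.
have kerI : forall i p, T i p = 0 -> I p.
  move=> i p /(Hker i) [q ->]; apply/HI.
  exists (fun j => if j == i then q ord0 else 0).
  rewrite big_ord1 (bigD1 i) //= eqxx big1 ?addr0 // => j /negbTE ->.
  by rewrite mul0r.
have IW : forall p, I p -> W p = 0.
  move=> p /HI [q ->]; apply/HWk.
  exists (fun j => q j * f j); split => // j; apply/(Hker j).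
  by exists (fun _ => q j); rewrite big_ord1.
have WI : forall p, W p = 0 -> I p.
  move=> p /HWk [ps [Hps ->]].
  apply: (big_ind (fun p => I p)) => // j _; exact: kerI (Hps j).
have nfWT : forall m i, nf W m -> nf (T i) m.
  move=> m i nW; apply: NNPP => nT.
  have [v [Tv lmv]] := red_nf_ker Hlt (Hred i) nT.
  exact: (red_ker_nf Hlt HWr (IW _ (kerI _ _ Tv)) lmv nW).
split.
- case=> _ GB m; split; last by move=> nW i; apply: nfWT.
  move=> nT; apply: NNPP => nW.
  have [v [Wv lmv]] := red_nf_ker Hlt HWr nW.
  have [i [m0 [mi [lm0 lmi dv]]]] := GB v (WI _ Wv) (lm_ne0 lmv).
  have e := lm_unique Hlt lm0 lmv; subst m0.
  apply: (red_ker_nf Hlt (Hred i) (v := 'X_[m - mi] * f i) _ _ (nT i)).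
    by apply/(Hker i); exists (fun _ => 'X_[m - mi]); rewrite big_ord1.
  rewrite -{2}(submK dv); apply: lm_mul => //; split.
    by rewrite msuppX mem_seq1.
  by move=> m'; rewrite msuppX mem_seq1 => /eqP.
- move=> Conf; split.
    move=> i; apply/HI; exists (fun j => if j == i then 1 else 0).
    rewrite (bigD1 i) //= eqxx mul1r big1 ?addr0 // => j /negbTE ->.
    by rewrite mul0r.
  move=> p Ip nz; have [m lmp] := lm_exists Hlt nz.
  have nW : ~ nf W m := red_ker_nf Hlt HWr (IW _ Ip) lmp.
  have [i nTi] : exists i, ~ nf (T i) m.
    apply: NNPP => h; apply: nW; apply/Conf => i; apply: NNPP => ni.
    by apply: h; exists i.
  have [v [Tv lmv]] := red_nf_ker Hlt (Hred i) nTi.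
  have [q ev] := (Hker i v).1 Tv; rewrite big_ord1 in ev.
  have nzq : q ord0 != 0.
    apply/eqP => q0; move: (lm_ne0 lmv); by rewrite ev q0 mul0r eqxx.
  have [a lma] := lm_exists Hlt nzq.
  have [b lmb] := lm_exists Hlt (Hnz i).
  have := lm_mul Hlt lma lmb; rewrite -ev => lmab.
  exists i, (a + b)%MM, b; split => //.
    by rewrite -(lm_unique Hlt lmv lmab).
  exact: lem_addl.
Qed.
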